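(* The map $\alpha_M\colon M\otimes U_0\to U_0$, $(i,j)\otimes(r,s)\mapsto\big(\frac13(i+r),\frac13(j+s)\big)$, is an injective morphism of $\mathsf{SquaMS}$. Thus $(U_0,\alpha_M)$ is an injective $M\otimes-$ algebra.
   Context: Let $M_0=\{(r,s)\in[0,1]^2: r\in\{0,1\}\text{ or } s\in\{0,1\}\}$. A square metric space is a pair $(X,S_X)$ with $X$ a metric space with all distances at most $2$ and $S_X\colon M_0\to X$ injective such that (sq1) for $i\in\{0,1\}$, $r,s\in[0,1]$: $d_X(S_X(i,r),S_X(i,s))=|s-r|$ and $d_X(S_X(r,i),S_X(s,i))=|s-r|$; (sq2) $d_X(S_X(r,s),S_X(t,u))\ge|r-t|+|s-u|$. $\mathsf{SquaMS}$: these objects, with short maps $f$ satisfying $f\circ S_X=S_Y$ as morphisms. Let $N=\{0,1,2\}^2$, $M=N\setminus\{(1,1)\}$, also viewed as points of $\mathbb{R}^2$. For $X$ in $\mathsf{SquaMS}$, $M\otimes X=(M\times X)/\!\sim$, where $\sim$ is generated by $(m,S_X(p))\sim(n,S_X(q))$ whenever $m,n\in M$ differ by exactly $1$ in exactly one coordinate and $(m+p)/3=(n+q)/3$; $m\otimes x$ is the class of $(m,x)$. With $d((a,u),(b,v))=\frac13 d_X(u,v)$ if $a=b$ and $2$ otherwise, $M\otimes X$ has the quotient metric (infimum over finite chains of sums of consecutive distances, $\sim$-related consecutive pairs counting $0$). $S_{M\otimes X}(p)=m\otimes S_X(3p-m)$ for any $m\in M$ with $p\in(m+[0,1]^2)/3$.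 $U_0=[0,1]^2$ with the taxicab metric $|x-x'|+|y-y'|$ and $S_{U_0}$ the inclusion of $M_0$. *)

(* Defs.v *)
From Stdlib Require Import Reals Relations.
From Coquelicot Require Import Rbar Lub.
Open Scope R_scope.

Definition inU0 (p : R * R) : Prop :=
  0 <= fst p <= 1 /\ 0 <= snd p <= 1.

Definition inM0 (p : R * R) : Prop :=
  inU0 p /\ (fst p = 0 \/ fst p = 1 \/ snd p = 0 \/ snd p = 1).

Definition taxi (p q : R * R) : R :=
  Rabs (fst p - fst q) + Rabs (snd p - snd q).

Definition inM (m : nat * nat) : Prop :=
  (fst m <= 2)%nat /\ (snd m <= 2)%nat /\ m <> (1%nat, 1%nat).

Definition adjM (m n : nat * nat) : Prop :=
  (fst m = fst n /\ (snd m = S (snd n) \/ snd n = S (snd m))) \/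
  (snd m = snd n /\ (fst m = S (fst n) \/ fst n = S (fst m))).

Section Tensor.
Variable X : Type.
Variable memX : X -> Prop.
Variable dX : X -> X -> R.
Variable SX : R * R -> X.           (* S_X, only relevant on M_0 *)

Definition tpt : Type := ((nat * nat) * X)%type.

Definition tvalid (a : tpt) : Prop := inM (fst a) /\ memX (snd a).

Definition tgen (a b : tpt) : Prop :=
  exists p q : R * R,
    inM0 p /\ inM0 q /\ inM (fst a) /\ inM (fst b) /\ adjM (fst a) (fst b) /\
    snd a = SX p /\ snd b = SX q /\
    (INR (fst (fst a)) + fst p) / 3 = (INR (fst (fst b)) + fst q) / 3 /\
    (INR (snd (fst a)) + snd p) / 3 = (INR (snd (fst b)) + snd q) / 3.

Definition tequiv : tpt -> tpt -> Prop := clos_refl_sym_trans tpt tgen.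

Definition tbase (a b : tpt) : R :=
  if (Nat.eqb (fst (fst a)) (fst (fst b)) && Nat.eqb (snd (fst a)) (snd (fst b)))%bool
  then dX (snd a) (snd b) / 3 else 2.

Definition tstep (a b : tpt) (c : R) : Prop :=
  (tequiv a b /\ c = 0) \/ (~ tequiv a b /\ c = tbase a b).

Inductive chain_cost : tpt -> tpt -> R -> Prop :=
| cc_nil a : tvalid a -> chain_cost a a 0
| cc_cons a b c x r :
    tvalid a -> tstep a b x -> chain_cost b c r -> chain_cost a c (x + r).

(* the quotient metric (on representatives): infimum over chains *)
Definition qdist (a b : tpt) : Rbar := Glb_Rbar (fun r => chain_cost a b r).

End Tensor.

Definition U0tpt := tpt (R * R).
Definition U0valid : U0tpt -> Prop := tvalid (R * R) inU0.
Definition U0equiv : U0tpt -> U0tpt -> Prop := tequiv (R * R) (fun p => p).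
Definition U0qdist : U0tpt -> U0tpt -> Rbar :=
  qdist (R * R) inU0 taxi (fun p => p).

Definition alphaM (a : U0tpt) : R * R :=
  ((INR (fst (fst a)) + fst (snd a)) / 3, (INR (snd (fst a)) + snd (snd a)) / 3).

(* Main.v *)
Require Import Defs.
From Stdlib Require Import Reals Relations.
From Coquelicot Require Import Rbar Lub.
From Stdlib Require Import Lra Lia.
Open Scope R_scope.

Lemma part1 : forall a : U0tpt, U0valid a -> inU0 (alphaM a).
Proof.
  intros [[i j] [u1 u2]] [[Hi [Hj _]] [Hu1 Hu2]]; simpl in *.
  unfold inU0, alphaM; simpl.
  apply le_INR in Hi; apply le_INR in Hj. simpl in Hi, Hj.
  assert (0 <= INR i) by apply pos_INR.
  assert (0 <= INR j) by apply pos_INR.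
  split; split; unfold Rdiv; lra.
Qed.

Lemma part2 : forall a b : U0tpt, U0equiv a b -> alphaM a = alphaM b.
Proof.
  intros a b H. unfold U0equiv, tequiv in H.
  induction H.
  - destruct H as (p & q & _ & _ & _ & _ & _ & E1 & E2 & E3 & E4).
    destruct x as [[i j] u]; destruct y as [[k l] v]; simpl in *.
    subst. unfold alphaM; simpl. rewrite E3, E4. reflexivity.
  - reflexivity.
  - auto.
  - congruence.
Qed.

Lemma chain_valid : forall a c r,
  chain_cost (R*R) inU0 taxi (fun p => p) a c r -> U0valid a.
Proof. intros a c r H; destruct H; assumption. Qed.

Lemma Rabs_le_cases : forall x y, Rabs x <= y <-> (x <= y /\ - x <= y).
Proof. intros x y; unfold Rabs; destruct (Rcase_abs x); split; intros; lra. Qed.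

Lemma taxi_tri : forall p q s, taxi p s <= taxi p q + taxi q s.
Proof.
  intros p q s; unfold taxi.
  pose proof (Rabs_triang (fst p - fst q) (fst q - fst s)).
  pose proof (Rabs_triang (snd p - snd q) (snd q - snd s)).
  replace (fst p - fst s) with ((fst p - fst q) + (fst q - fst s)) by ring.
  replace (snd p - snd s) with ((snd p - snd q) + (snd q - snd s)) by ring.
  lra.
Qed.

Lemma taxi_U0 : forall p q, inU0 p -> inU0 q -> taxi p q <= 2.
Proof.
  intros [p1 p2] [q1 q2] [H1 H2] [H3 H4]; unfold taxi; simpl in *.
  unfold Rabs; destruct (Rcase_abs (p1 - q1)); destruct (Rcase_abs (p2 - q2)); lra.
Qed.

Lemma step_bound : forall a b x, U0valid a -> U0valid b ->
  tstep (R*R) taxi (fun p => p) a b x -> taxi (alphaM a) (alphaM b) <= x.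
Proof.
  intros a b x Va Vb [[He Hx] | [_ Hx]].
  - rewrite (part2 a b He). subst. unfold taxi.
    rewrite !Rminus_diag, Rabs_R0. lra.
  - subst x. unfold tbase.
    destruct a as [[i j] [u1 u2]]; destruct b as [[k l] [v1 v2]]; simpl.
    destruct (Nat.eqb i k) eqn:E1; destruct (Nat.eqb j l) eqn:E2; simpl;
      try (apply taxi_U0; apply part1; assumption).
    apply Nat.eqb_eq in E1; apply Nat.eqb_eq in E2; subst.
    unfold taxi, alphaM; simpl.
    replace ((INR k + u1) / 3 - (INR k + v1) / 3) with ((u1 - v1) / 3) by field.
    replace ((INR l + u2) / 3 - (INR l + v2) / 3) with ((u2 - v2) / 3) by field.
    unfold Rdiv. rewrite !Rabs_mult, (Rabs_right (/3)) by lra. lra.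
Qed.

Lemma chain_bound : forall a c r,
  chain_cost (R*R) inU0 taxi (fun p => p) a c r -> taxi (alphaM a) (alphaM c) <= r.
Proof.
  intros a c r H; induction H.
  - unfold taxi; rewrite !Rminus_diag, Rabs_R0; lra.
  - pose proof (chain_valid _ _ _ H1) as Vb.
    pose proof (step_bound _ _ _ H Vb H0).
    pose proof (taxi_tri (alphaM a) (alphaM b) (alphaM c)). lra.
Qed.

Lemma coord_cases : forall (i k : nat) u v, 0 <= u <= 1 -> 0 <= v <= 1 ->
  INR i + u = INR k + v ->
  (i = k /\ u = v) \/ (i = S k /\ u = 0 /\ v = 1) \/ (k = S i /\ u = 1 /\ v = 0).
Proof.
  intros i k u v Hu Hv E.
  assert (C : i = k \/ i = S k \/ k = S i \/ (S (S k) <= i)%nat \/ (S (S i) <= k)%nat) by lia.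
  destruct C as [C|[C|[C|[C|C]]]].
  - subst. left; split; [reflexivity|lra].
  - subst. rewrite S_INR in E. right; left; repeat split; lra.
  - subst. rewrite S_INR in E. right; right; repeat split; lra.
  - apply le_INR in C. rewrite !S_INR in C. lra.
  - apply le_INR in C. rewrite !S_INR in C. lra.
Qed.

Lemma tgen_intro : forall i j k l (u v : R*R),
  inM (i,j) -> inM (k,l) -> adjM (i,j) (k,l) -> inM0 u -> inM0 v ->
  INR i + fst u = INR k + fst v -> INR j + snd u = INR l + snd v ->
  U0equiv ((i,j),u) ((k,l),v).
Proof.
  intros. apply rst_step. exists u, v. simpl.
  refine (conj H2 (conj H3 (conj H (conj H0 (conj H1 (conj eq_refl (conj eq_refl (conj _ _)))))))).
  - apply (f_equal (fun t => t / 3)); assumption.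
  - apply (f_equal (fun t => t / 3)); assumption.
Qed.

Lemma part5 : forall a b : U0tpt, U0valid a -> U0valid b -> alphaM a = alphaM b -> U0equiv a b.
Proof.
  intros [[i j] [u1 u2]] [[k l] [v1 v2]] [Ma Ua] [Mb Ub] E.
  simpl in *. unfold alphaM in E; simpl in E.
  injection E; intros E2 E1.
  assert (F1 : INR i + u1 = INR k + v1) by lra.
  assert (F2 : INR j + u2 = INR l + v2) by lra.
  destruct Ua as [Hu1 Hu2]; destruct Ub as [Hv1 Hv2]; simpl in *.
  pose proof (coord_cases i k u1 v1 Hu1 Hv1 F1) as C1.
  pose proof (coord_cases j l u2 v2 Hu2 Hv2 F2) as C2.
  assert (Ma' := Ma); assert (Mb' := Mb).
  destruct Ma as [Hi [Hj Hij]]; destruct Mb as [Hk [Hl Hkl]]; simpl in *.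
  destruct C1 as [[-> ->]|[[-> [-> ->]]|[-> [-> ->]]]];
  destruct C2 as [[-> ->]|[[-> [-> ->]]|[-> [-> ->]]]];
  try (apply rst_refl);
  try (apply tgen_intro; try assumption;
       try (unfold adjM; simpl; lia);
       try (unfold inM0, inU0; simpl; repeat split; lra);
       fail).
  (* diagonal cases: go through an intermediate cell *)
  all: match goal with
       | |- U0equiv ((?i, ?j), (?a1, ?a2)) ((?k, ?l), (?b1, ?b2)) =>
           destruct (Nat.eq_dec i 1%nat); destruct (Nat.eq_dec l 1%nat);
           [ apply rst_trans with ((k, j), (b1, a2)) 
           | apply rst_trans with ((i, l), (a1, b2))
           | apply rst_trans with ((i, l), (a1, b2))
           | apply rst_trans with ((i, l), (a1, b2)) ];
           apply tgen_intro; simpl;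
           try (unfold inM; simpl; repeat split; try lia; try congruence; intro Hc; injection Hc; lia);
           try (unfold adjM; simpl; lia);
           try (unfold inM0, inU0; simpl; repeat split; lra);
           try assumption; try (rewrite ?S_INR; lra)
       end.
Qed.

Theorem mainTheorem14 :
  (* alpha_M maps M (x) U_0 into U_0 *)
  (forall a : U0tpt, U0valid a -> inU0 (alphaM a)) /\
  (* alpha_M is well defined on ~-classes *)
  (forall a b : U0tpt, U0valid a -> U0valid b -> U0equiv a b -> alphaM a = alphaM b) /\
  (* alpha_M is short for the quotient metric *)
  (forall a b : U0tpt, U0valid a -> U0valid b ->
     Rbar_le (Finite (taxi (alphaM a) (alphaM b))) (U0qdist a b)) /\
  (* alpha_M o S_{M (x) U_0} = S_{U_0}, for every admissible choice of m *)
  (forall (p : R * R) (m : nat * nat), inM0 p -> inM m ->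
     inU0 (3 * fst p - INR (fst m), 3 * snd p - INR (snd m)) ->
     alphaM (m, (3 * fst p - INR (fst m), 3 * snd p - INR (snd m))) = p) /\
  (* alpha_M is injective on M (x) U_0 = (M x U_0)/~ *)
  (forall a b : U0tpt, U0valid a -> U0valid b -> alphaM a = alphaM b -> U0equiv a b).
Proof.
  split; [exact part1|]. split; [intros; apply part2; assumption|].
  split.
  - intros a b _ _. unfold U0qdist, qdist.
    destruct (Glb_Rbar_correct (fun r => chain_cost (R*R) inU0 taxi (fun p => p) a b r)) as [_ G].
    apply G. intros r Hr. simpl. apply chain_bound. exact Hr.
  - split; [|exact part5].
    intros [p1 p2] [m1 m2] _ _ _. unfold alphaM; simpl. f_equal; field.
Qed.
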